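(* Consider a Markov decision process with state space $\mathcal{S}$ and action space $\mathcal{A}$ (subsets of Euclidean spaces), initial state distribution $\alpha$, stochastic policy $\pi(a\mid s)$, discount factor $\gamma\in(0,1)$, reward function $r(s,a)$, real transition density $T$ and learned transition density $T'$. Let $\rho_T^{\alpha,\pi},\rho_{T'}^{\alpha,\pi}$ be the normalized occupancy measures generated by $(\alpha,\pi,T)$ and $(\alpha,\pi,T')$, and let $p(s,a,s')=\rho_T^{\alpha,\pi}(s,a)T(s'\mid s,a)$, $p'(s,a,s')=\rho_{T'}^{\alpha,\pi}(s,a)T'(s'\mid s,a)$. If $r$ is $L_r$-Lipschitz and the training error of the WGAN is $\epsilon$, i.e. $W_1(p\,\|\,p')=\epsilon$, then $$|R(\pi,T)-R(\pi,T')|\le \frac{\epsilon L_r}{1-\gamma}.$$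
   Context: The normalized occupancy measure is $\rho_T^{\alpha,\pi}(s,a)=\sum_{t=0}^\infty(1-\gamma)\gamma^t\,\mathbb{P}(s_t=s,a_t=a\mid\alpha,\pi,T)$ for trajectories $s_0\sim\alpha$, $a_t\sim\pi(\cdot\mid s_t)$, $s_{t+1}\sim T(\cdot\mid s_t,a_t)$. The cumulative reward is $R(\pi,T)=R(\alpha,\pi,T)=\mathbb{E}\big[\sum_{t=0}^\infty\gamma^t r(s_t,a_t)\mid\alpha,\pi,T\big]=\mathbb{E}_{(s,a)\sim\rho_T^{\alpha,\pi}}[r(s,a)]/(1-\gamma)$. $W_1$ denotes the 1-Wasserstein distance, with Euclidean metrics on $\mathcal{S}\times\mathcal{A}$ and $\mathcal{S}\times\mathcal{A}\times\mathcal{S}$. *)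

(* Defs.v *)
From HB Require Import structures.
From mathcomp Require Import all_boot all_order all_algebra.
From mathcomp Require Import all_classical all_reals all_analysis.
Set Implicit Arguments. Unset Strict Implicit. Unset Printing Implicit Defensive.
Import Order.TTheory GRing.Theory Num.Theory.
Import numFieldNormedType.Exports.
Local Open Scope classical_set_scope.
Local Open Scope ring_scope.

Section MDP.
Context {R : realType}.

Definition sqdist {n : nat} (x y : n.-tuple R) : R :=
  \sum_(i < n) (tnth x i - tnth y i) ^+ 2.

Definition dist_SA {n m : nat} (x y : n.-tuple R * m.-tuple R) : R :=
  Num.sqrt (sqdist x.1 y.1 + sqdist x.2 y.2).

Definition dist_SAS {n m : nat}
    (x y : (n.-tuple R * m.-tuple R) * n.-tuple R) : R :=
  Num.sqrt (sqdist x.1.1 y.1.1 + sqdist x.1.2 y.1.2 + sqdist x.2 y.2).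

Context {n m : nat}.
Notation S := (n.-tuple R).
Notation A := (m.-tuple R).

(** Law of (s_t, a_t) for s_0 ~ alpha, a_t ~ pi(.|s_t), s_{t+1} ~ T(.|s_t,a_t):
    state_action_law t E = P((s_t, a_t) \in E | alpha, pi, T). *)
Fixpoint state_action_law (alpha : probability S R) (pi : R.-pker S ~> A)
    (T : R.-pker (S * A) ~> S) (t : nat) : set (S * A) -> \bar R :=
  match t with
  | 0 => fun E => (\int[alpha]_s pi s (xsection E s))%E
  | t'.+1 => fun E =>
      (\int[state_action_law alpha pi T t']_x
         \int[T x]_s' pi s' (xsection E s'))%E
  end.

Definition occupancy (alpha : probability S R) (pi : R.-pker S ~> A)
    (T : R.-pker (S * A) ~> S) (gamma : R) : set (S * A) -> \bar R :=
  fun E => (\sum_(0 <= t <oo)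
              ((1 - gamma) * gamma ^+ t)%:E * state_action_law alpha pi T t E)%E.

(** p(s,a,s') = rho(s,a) T(s'|s,a), as a measure on (S x A) x S. *)
Definition occ_transition (rho : set (S * A) -> \bar R)
    (T : R.-pker (S * A) ~> S) : set ((S * A) * S) -> \bar R :=
  fun E => (\int[rho]_x T x (xsection E x))%E.

Definition cum_reward (alpha : probability S R) (pi : R.-pker S ~> A)
    (T : R.-pker (S * A) ~> S) (gamma : R) (r : S * A -> R) : \bar R :=
  ((\int[occupancy alpha pi T gamma]_x (r x)%:E) * ((1 - gamma)^-1)%:E)%E.

Definition coupling (mu nu : set ((S * A) * S) -> \bar R)
    (c : probability (((S * A) * S) * ((S * A) * S))%type R) : Prop :=
  (forall E, measurable E -> c (E `*` setT) = mu E) /\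
  (forall E, measurable E -> c (setT `*` E) = nu E).

Definition W1_SAS (mu nu : set ((S * A) * S) -> \bar R) : \bar R :=
  ereal_inf [set (\int[c]_z (dist_SAS z.1 z.2)%:E)%E
            | c in [set c | coupling mu nu c]].

End MDP.

(* Main.v *)
From Pilot Require Import Defs.
From HB Require Import structures.
From mathcomp Require Import all_boot all_order all_algebra.
From mathcomp Require Import all_classical all_reals all_analysis.
From mathcomp Require Import measurable_realfun.
Import Order.TTheory GRing.Theory Num.Theory.
Local Open Scope classical_set_scope.
Local Open Scope ring_scope.

Module PilotInfra.
Local Open Scope ereal_scope.

Section infra.
Context {R : realType}.

Section mix.
Context d1 d2 (X : measurableType d1) (Y : measurableType d2).
Variables (mu : {measure set X -> \bar R}) (k : R.-ker X ~> Y).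

Definition mix (U : set Y) := \int[mu]_x k x U.

Let mix0 : mix set0 = 0.
Proof.
by rewrite /mix (eq_integral (cst 0)) ?integral0// => y _; rewrite measure0.
Qed.

Let mix_ge0 U : 0 <= mix U. Proof. exact: integral_ge0. Qed.

Let mix_sigma_additive : semi_sigma_additive mix.
Proof.
move=> U mU tU mUU; rewrite [X in _ --> X](_ : _ =
  \int[mu]_y (\sum_(n <oo) k y (U n))); last first.
  apply: eq_integral => V _.
  by apply/esym/cvg_lim => //; exact/measure_semi_sigma_additive.
apply/cvg_closeP; split.
  by apply: is_cvg_nneseries => n _ _; exact: integral_ge0.
rewrite closeE// integral_nneseries// => n.
exact: (measurable_kernel k _ (mU n)).
Qed.

HB.instance Definition _ := isMeasure.Build _ _ R
  mix mix0 mix_ge0 mix_sigma_additive.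

End mix.
Arguments mix {d1 d2 X Y} mu k.


Section integral_mix.
Context d1 d2 (X : measurableType d1) (Y : measurableType d2).
Variables (mu : {measure set X -> \bar R}) (k : R.-ker X ~> Y).

Let integral_mix_indic E (mE : measurable E) :
  \int[mix mu k]_z (\1_E z)%:E = \int[mu]_y (\int[k y]_z (\1_E z)%:E).
Proof.
rewrite integral_indic//= /mix.
by apply: eq_integral => y _; rewrite integral_indic.
Qed.

Import HBNNSimple.

Let integral_mix_nnsfun (f : {nnsfun Y >-> R}) :
  \int[mix mu k]_z (f z)%:E = \int[mu]_y (\int[k y]_z (f z)%:E).
Proof.
under [in LHS]eq_integral do rewrite fimfunE -fsumEFin//.
rewrite ge0_integral_fsum//; last 2 first.
  - by move=> r; exact/measurable_EFinP/measurableT_comp.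
  - by move=> r z _; rewrite EFinM nnfun_muleindic_ge0.
under [in RHS]eq_integral.
  move=> y _.
  under eq_integral.
    by move=> z _; rewrite fimfunE -fsumEFin//; over.
  rewrite /= ge0_integral_fsum//; last 2 first.
    - by move=> r; exact/measurable_EFinP/measurableT_comp.
    - by move=> r z _; rewrite EFinM nnfun_muleindic_ge0.
  under eq_fsbigr.
    move=> r _.
    rewrite (integralZl_indic _ (fun r => f @^-1` [set r]))//; last first.
      by move=> r0; rewrite preimage_nnfun0.
    rewrite integral_indic// setIT.
    over.
  over.
rewrite /= ge0_integral_fsum//; last 2 first.
  - move=> r; apply: measurable_funeM.
    exact: (measurable_kernel k (f @^-1` [set r]) _).
  - move=> n y _.
    have := mulemu_ge0 (fun n => f @^-1` [set n]).
    by apply; exact: preimage_nnfun0.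
apply: eq_fsbigr => r _.
rewrite (integralZl_indic _ (fun r => f @^-1` [set r]))//; last first.
  exact: preimage_nnfun0.
rewrite /= integral_mix_indic//.
have [r0|r0] := leP 0%R r.
  rewrite ge0_integralZl//.
    by under eq_integral do rewrite integral_indic// setIT.
  exact: (measurable_kernel k (f @^-1` [set r]) _).
rewrite integral0_eq ?mule0.
  by rewrite integral0_eq// => y _; rewrite preimage_nnfun0// measure0 mule0.
by move=> y _; rewrite integral0_eq// => z _; rewrite preimage_nnfun0// indic0.
Qed.

Lemma integral_mix f : (forall z, 0 <= f z) -> measurable_fun [set: Y] f ->
  \int[mix mu k]_z f z = \int[mu]_y (\int[k y]_z f z).
Proof.
move=> f0 mf.
pose f_ := nnsfun_approx measurableT mf.
transitivity (\int[mix mu k]_z (lim ((f_ n z)%:E @[n --> \oo]))).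
  by apply/eq_integral => z _; apply/esym/cvg_lim => //=; exact: cvg_nnsfun_approx.
rewrite monotone_convergence//; last 3 first.
  by move=> n; exact/measurable_EFinP.
  by move=> n z _; rewrite lee_fin.
  by move=> z _ a b ab; rewrite lee_fin; exact/lefP/nd_nnsfun_approx.
rewrite (_ : (fun _ => _) =
    (fun n => \int[mu]_y (\int[k y]_z (f_ n z)%:E)))//; last first.
  by apply/funext => n; rewrite integral_mix_nnsfun.
transitivity (\int[mu]_y lim ((\int[k y]_z (f_ n z)%:E) @[n --> \oo])).
  rewrite -monotone_convergence//; last 3 first.
  - move=> n; apply: measurable_fun_integral_kernel => //.
    + by move=> U mU; exact: (measurable_kernel k _ mU).
    + by move=> z; rewrite lee_fin.
    + exact/measurable_EFinP.
  - by move=> n y _; apply: integral_ge0 => // z _; rewrite lee_fin.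
  - move=> y _ a b ab; apply: ge0_le_integral => //.
    + by move=> z _; rewrite lee_fin.
    + exact/measurable_EFinP.
    + exact/measurable_EFinP.
    + by move=> z _; rewrite lee_fin; exact/lefP/nd_nnsfun_approx.
apply: eq_integral => y _; rewrite -monotone_convergence//; last 3 first.
  - by move=> n; exact/measurable_EFinP.
  - by move=> n z _; rewrite lee_fin.
  - by move=> z _ a b ab; rewrite lee_fin; exact/lefP/nd_nnsfun_approx.
by apply: eq_integral => z _; apply/cvg_lim => //; exact: cvg_nnsfun_approx.
Qed.

End integral_mix.


Section xsecK.
Context d1 d2 (X : measurableType d1) (Y : measurableType d2).
Variable k : R.-pker X ~> Y.

Definition xsec_fun (x : X) (E : set (X * Y)) := k x (xsection E x).

Let xsec0 x : xsec_fun x set0 = 0.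
Proof. by rewrite /xsec_fun xsection0 measure0. Qed.

Let xsec_ge0 x U : 0 <= xsec_fun x U. Proof. exact: measure_ge0. Qed.

Let xsec_sigma_additive x : semi_sigma_additive (xsec_fun x).
Proof.
move=> F mF tF mUF; rewrite /xsec_fun xsection_bigcup.
apply: measure_semi_sigma_additive.
- by move=> n; exact: measurable_xsection.
- exact: trivIset_xsection.
- by rewrite -xsection_bigcup; exact: measurable_xsection.
Qed.

HB.instance Definition _ x := isMeasure.Build _ _ R
  (xsec_fun x) (xsec0 x) (xsec_ge0 x) (@xsec_sigma_additive x).

Definition xsecK : X -> {measure set (X * Y) -> \bar R} := xsec_fun.

Let mxsecK U : measurable U -> measurable_fun [set: X] (xsecK ^~ U).
Proof. by move=> mU; apply: (measurable_fun_xsection_finite_kernel k); rewrite inE. Qed.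

HB.instance Definition _ := isKernel.Build _ _ _ _ _ xsecK mxsecK.

Let xsecK_prob x : xsecK x [set: X * Y] = 1.
Proof.
change (k x (xsection [set: X * Y] x) = 1).
have -> : xsection [set: X * Y] x = setT.
  by apply/seteqP; split => // y _; rewrite /xsection/= inE.
exact: prob_kernel.
Qed.

HB.instance Definition _ := Kernel_isProbability.Build _ _ _ _ _ xsecK xsecK_prob.

End xsecK.
Arguments xsecK {d1 d2 X Y} k.
Arguments xsec_fun {d1 d2 X Y} k.

Section compK.
Context d1 d2 d3 (X : measurableType d1) (Y : measurableType d2)
  (Z : measurableType d3).
Variables (k : R.-pker X ~> Y) (l : R.-pker Y ~> Z).

Definition compK : X -> {measure set Z -> \bar R} := fun x => mix (k x) l.

Let mcompK U : measurable U -> measurable_fun [set: X] (compK ^~ U).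
Proof.
move=> mU; apply: measurable_fun_integral_kernel.
- by move=> V mV; exact: (measurable_kernel k _ mV).
- by move=> z; exact: measure_ge0.
- exact: (measurable_kernel l _ mU).
Qed.

HB.instance Definition _ := isKernel.Build _ _ _ _ _ compK mcompK.

Let compK_prob x : compK x [set: Z] = 1.
Proof.
rewrite /compK /= /mix (eq_integral (cst 1)); last first.
  by move=> y _; rewrite prob_kernel.
by rewrite integral_cst// mul1e prob_kernel.
Qed.

HB.instance Definition _ := Kernel_isProbability.Build _ _ _ _ _ compK compK_prob.

End compK.
Arguments compK {d1 d2 d3 X Y Z} k l.

Section transfer.
Context d1 d2 (X : measurableType d1) (Y : measurableType d2).
Variables (k : R.-pker X ~> Y).

Lemma xsecK_fst x (h : X -> \bar R) : (forall x, 0 <= h x) ->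
  measurable_fun [set: X] h -> \int[xsecK k x]_z h z.1 = h x.
Proof.
move=> h0 mh.
have mp : measurable_fun [set: Y] (fun y : Y => (x, y)).
  exact: pair1_measurable.
rewrite (eq_measure_integral (pushforward (k x) (fun y : Y => (x, y)))); last first.
  by move=> A mA _; rewrite /= /xsec_fun /pushforward xsectionE.
rewrite ge0_integral_pushforward//; last exact: measurableT_comp.
by rewrite preimage_setT (eq_integral (fun _ => h x))// integral_cst// prob_kernel mule1.
Qed.


Lemma coupling_transfer d3 (W : measurableType d3)
  (mu : {measure set X -> \bar R}) (c : {measure set W -> \bar R})
  (phi : W -> X * Y) (mphi : measurable_fun [set: W] phi)
  (hc : forall E, measurable E -> c (phi @^-1` E) = mix mu (xsecK k) E)
  (h : X -> \bar R) : (forall x, 0 <= h x) -> measurable_fun [set: X] h ->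
  \int[c]_w h (phi w).1 = \int[mu]_x h x.
Proof.
move=> h0 mh.
have -> : \int[c]_w h (phi w).1 = \int[pushforward c phi]_z h z.1.
  rewrite [RHS]ge0_integral_pushforward//; last exact: measurableT_comp.
rewrite (eq_measure_integral (mix mu (xsecK k))); last first.
  by move=> A mA _; exact: hc.
rewrite integral_mix//; last exact: measurableT_comp.
by apply: eq_integral => x _; rewrite xsecK_fst.
Qed.

End transfer.
End infra.
Arguments mix {R d1 d2 X Y} mu k.
Arguments xsecK {R d1 d2 X Y} k.
Arguments xsec_fun {R d1 d2 X Y} k.
Arguments compK {R d1 d2 d3 X Y Z} k l.
Local Open Scope ereal_scope.

Section mdp.
Context {R : realType} {n m : nat}.
Notation S := (n.-tuple R).
Notation A := (m.-tuple R).
Variables (alpha : probability S R) (pi : R.-pker S ~> A)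
  (T : R.-pker (S * A) ~> S).

Fixpoint law' (t : nat) : {measure set (S * A) -> \bar R} :=
  match t with
  | 0 => mix alpha (xsecK pi)
  | t'.+1 => mix (law' t') (compK T (xsecK pi))
  end.

Lemma lawE t : state_action_law alpha pi T t = law' t.
Proof.
elim: t => [//|t IH] /=.
by apply/funext => E; rewrite IH.
Qed.

Variables (gamma : R) (hw : forall t, (0 <= (1 - gamma) * gamma ^+ t)%R).

Definition occM : {measure set (S * A) -> \bar R} :=
  mseries (fun t => mscale (NngNum (hw t)) (law' t)) 0.

Lemma occE : occupancy alpha pi T gamma = occM.
Proof.
apply/funext => E; rewrite /occupancy /occM /= /mseries.
congr (limn _); apply/funext => N; apply: eq_bigr => t _.
by rewrite lawE.
Qed.

Lemma occ_transE : occ_transition (occupancy alpha pi T gamma) T =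
  mix occM (xsecK T).
Proof. by rewrite occE. Qed.

End mdp.

Section meas.
Context {R : realType}.
Lemma measurable_sqdist n d (W : measurableType d) (f g : W -> n.-tuple R) :
  measurable_fun [set: W] f -> measurable_fun [set: W] g ->
  measurable_fun [set: W] (fun w => sqdist (f w) (g w)).
Proof.
move=> mf mg; rewrite /sqdist; apply: measurable_sum => i.
apply: measurable_funX; apply: measurable_funB.
- exact: measurableT_comp (measurable_tnth i) mf.
- exact: measurableT_comp (measurable_tnth i) mg.
Qed.
End meas.

Section distlemmas.
Context {R : realType} {n m : nat}.
Local Open Scope ring_scope.

Lemma sqdist_ge0 k (x y : k.-tuple R) : 0 <= sqdist x y.
Proof. by apply: sumr_ge0 => i _; exact: sqr_ge0. Qed.

Lemma dist_SA_ge0 (x y : n.-tuple R * m.-tuple R) : 0 <= dist_SA x y.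
Proof. exact: sqrtr_ge0. Qed.

Lemma dist_SA_le (x y : (n.-tuple R * m.-tuple R) * n.-tuple R) :
  dist_SA x.1 y.1 <= dist_SAS x y.
Proof.
rewrite /dist_SA /dist_SAS ler_sqrt; last first.
  by rewrite !addr_ge0 ?sqdist_ge0.
by rewrite lerDl sqdist_ge0.
Qed.

Lemma measurable_dist_SAS :
  measurable_fun [set: ((n.-tuple R * m.-tuple R) * n.-tuple R) *
     ((n.-tuple R * m.-tuple R) * n.-tuple R)]
    (fun w => dist_SAS w.1 w.2).
Proof.
rewrite /dist_SAS.
apply: (measurableT_comp (continuous_measurable_fun (@sqrt_continuous R))).
apply: measurable_funD; first apply: measurable_funD.
- apply: measurable_sqdist.
  + by apply: measurableT_comp measurable_fst _; apply: measurableT_comp measurable_fst measurable_fst.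
  + by apply: measurableT_comp measurable_fst _; apply: measurableT_comp measurable_fst measurable_snd.
- apply: measurable_sqdist.
  + by apply: measurableT_comp measurable_snd _; apply: measurableT_comp measurable_fst measurable_fst.
  + by apply: measurableT_comp measurable_snd _; apply: measurableT_comp measurable_fst measurable_snd.
- apply: measurable_sqdist.
  + by apply: measurableT_comp measurable_snd measurable_fst.
  + by apply: measurableT_comp measurable_snd measurable_snd.
Qed.
End distlemmas.
End PilotInfra.
Import PilotInfra.


Theorem theorem1 (R : realType) (n m : nat)
    (alpha : probability (n.-tuple R) R)
    (pi : R.-pker (n.-tuple R) ~> (m.-tuple R))
    (T T' : R.-pker (n.-tuple R * m.-tuple R) ~> (n.-tuple R))
    (gamma : R) (r : n.-tuple R * m.-tuple R -> R) (L_r eps : R) :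
  0 < gamma < 1 ->
  (forall x y, `| r x - r y | <= L_r * dist_SA x y) ->
  (occupancy alpha pi T gamma).-integrable setT (fun x => (r x)%:E) ->
  (occupancy alpha pi T' gamma).-integrable setT (fun x => (r x)%:E) ->
  W1_SAS (occ_transition (occupancy alpha pi T gamma) T)
         (occ_transition (occupancy alpha pi T' gamma) T') = eps%:E ->
  (`| cum_reward alpha pi T gamma r - cum_reward alpha pi T' gamma r |
     <= (eps * L_r / (1 - gamma))%:E)%E.
Proof.
move=> /andP[g0 g1] Lip int1 int2 W1eq.
have hw : forall t, 0 <= (1 - gamma) * gamma ^+ t.
  by move=> t; apply: mulr_ge0; [rewrite subr_ge0 ltW|apply: exprn_ge0; rewrite ltW].
rewrite /cum_reward.
rewrite /W1_SAS !(occ_transE _ _ _ _ hw) in W1eq.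
rewrite !(occE _ _ _ _ hw) in int1 int2 *.
set mu1 := occM alpha pi T gamma hw in int1 W1eq *.
set mu2 := occM alpha pi T' gamma hw in int2 W1eq *.
clearbody mu1 mu2.
have mr : measurable_fun [set: n.-tuple R * m.-tuple R] r.
  by apply/measurable_EFinP; exact: (measurable_int _ int1).
have /fineK Ea := integrable_fin_num measurableT int1.
set a := fine _ in Ea.

have /fineK Eb := integrable_fin_num measurableT int2.
set b := fine _ in Eb.
clearbody a b.
set p1 := mix mu1 (xsecK T) in W1eq.
set p2 := mix mu2 (xsecK T') in W1eq.
pose F1 := fun w : ((n.-tuple R * m.-tuple R) * n.-tuple R) *
   ((n.-tuple R * m.-tuple R) * n.-tuple R) => r w.1.1.
pose F2 := fun w : ((n.-tuple R * m.-tuple R) * n.-tuple R) *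
   ((n.-tuple R * m.-tuple R) * n.-tuple R) => r w.2.1.
have mF1 : measurable_fun setT F1.
  by apply: measurableT_comp mr _; apply: measurableT_comp measurable_fst measurable_fst.
have mF2 : measurable_fun setT F2.
  by apply: measurableT_comp mr _; apply: measurableT_comp measurable_fst measurable_snd.
have claim : forall c, coupling p1 p2 c ->
    ((`|a - b|)%:E <= \int[c]_w (`|F1 w - F2 w|)%:E)%E.
  move=> c [hc1 hc2].
  have t1 h : (forall x, 0 <= h x)%E -> measurable_fun setT h ->
      (\int[c]_w (h (fst w).1) = \int[mu1]_x h x)%E.
    move=> h0 mh.
    have hc : forall E, measurable E -> c (fst @^-1` E) = mix mu1 (xsecK T) E.
      by move=> E mE; rewrite -setXT; exact: hc1.
    exact: (@coupling_transfer _ _ _ _ _ T _ _ mu1 c fst measurable_fst hc h h0 mh).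
  have t2 h : (forall x, 0 <= h x)%E -> measurable_fun setT h ->
      (\int[c]_w (h (snd w).1) = \int[mu2]_x h x)%E.
    move=> h0 mh.
    have hc : forall E, measurable E -> c (snd @^-1` E) = mix mu2 (xsecK T') E.
      by move=> E mE; rewrite -setTX; exact: hc2.
    exact: (@coupling_transfer _ _ _ _ _ T' _ _ mu2 c snd measurable_snd hc h h0 mh).
  have mrE : measurable_fun setT (fun x => (r x)%:E) by exact/measurable_EFinP.
  have I1 : (\int[c]_w (F1 w)%:E = a%:E)%E.
    rewrite Ea [LHS]integralE [RHS]integralE.
    rewrite -(t1 ((fun x => (r x)%:E)^\+)%E) //; last exact: measurable_funepos.
    rewrite -(t1 ((fun x => (r x)%:E)^\-)%E) //; last exact: measurable_funeneg.
    by congr (_ - _)%E; apply: eq_integral => w _; rewrite ?funeposE ?funenegE.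
  have I2 : (\int[c]_w (F2 w)%:E = b%:E)%E.
    rewrite Eb [LHS]integralE [RHS]integralE.
    rewrite -(t2 ((fun x => (r x)%:E)^\+)%E) //; last exact: measurable_funepos.
    rewrite -(t2 ((fun x => (r x)%:E)^\-)%E) //; last exact: measurable_funeneg.
    by congr (_ - _)%E; apply: eq_integral => w _; rewrite ?funeposE ?funenegE.
  have iF1 : c.-integrable setT (fun w => (F1 w)%:E).
    apply/integrableP; split; first exact/measurable_EFinP.
    rewrite (t1 (fun x => `|(r x)%:E|)%E) //; last exact: measurableT_comp.
    by case/integrableP: int1.
  have iF2 : c.-integrable setT (fun w => (F2 w)%:E).
    apply/integrableP; split; first exact/measurable_EFinP.
    rewrite (t2 (fun x => `|(r x)%:E|)%E) //; last exact: measurableT_comp.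
    by case/integrableP: int2.
  have -> : (`|a - b|)%:E = `|(\int[c]_w ((fun w => (F1 w)%:E) \- (fun w => (F2 w)%:E)) w)|%E.
    by rewrite integralB// I1 I2 -EFinB abse_EFin.
  apply: le_trans (le_abse_integral _ _ _) _ => //.
    by apply: emeasurable_funB; exact/measurable_EFinP.
have [[c0 Hc0]|Hn] := pselect (exists c, coupling p1 p2 c); last first.
  exfalso; move: W1eq.
  rewrite (_ : [set _ | c in _] = set0) ?ereal_inf0//.
  by apply/seteqP; split => // x [c Hc _]; apply: Hn; exists c.
have key : `|a - b| <= eps * L_r.
  have [Lpos|Lneg] := ltP 0 L_r.
    have lb : forall c, coupling p1 p2 c ->
        ((`|a - b| / L_r)%:E <= \int[c]_z (dist_SAS z.1 z.2)%:E)%E.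
      move=> c Hc.
      have h1 := claim c Hc.
      have h2 : (\int[c]_w (`|F1 w - F2 w|)%:E <=
                 L_r%:E * \int[c]_z (dist_SAS z.1 z.2)%:E)%E.
        rewrite -ge0_integralZl//; last 3 first.
        - by apply/measurable_EFinP; exact: measurable_dist_SAS.
        - by move=> z _; rewrite lee_fin sqrtr_ge0.
        - by rewrite lee_fin ltW.
        apply: ge0_le_integral => //.
        - apply/measurable_EFinP; apply: measurableT_comp => //.
          exact: measurable_funB.
        - apply: measurable_funeM.
          by apply/measurable_EFinP; exact: measurable_dist_SAS.
        - move=> w _; rewrite -EFinM lee_fin.
          apply: le_trans (Lip w.1.1 w.2.1) _.
          by apply: ler_wpM2l; [exact: ltW|exact: dist_SA_le].
      move: (le_trans h1 h2).
      case: (\int[c]_z _)%E => [y||].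
      - by rewrite -EFinM !lee_fin ler_pdivrMr// mulrC.
      - by rewrite leey.
      - by rewrite gt0_muleNy ?lte_fin// leeNy_eq.
    have : ((`|a - b| / L_r)%:E <= eps%:E)%E.
      by rewrite -W1eq; apply: le_ereal_inf_tmp => _ [c Hc <-]; exact: lb.
    by rewrite lee_fin ler_pdivrMr// mulrC.
  have rc : forall x y, `|r x - r y| = 0.
    move=> x y; apply/eqP; rewrite eq_le normr_ge0 andbT.
    apply: le_trans (Lip x y) _.
    exact: mulr_le0_ge0 Lneg (dist_SA_ge0 _ _).
  have ab0 : `|a - b| <= 0.
    have := claim c0 Hc0.
    rewrite (eq_integral (cst 0%E)); last by move=> w _; rewrite /F1 /F2 rc.
    by rewrite integral0 lee_fin.
  apply: le_trans ab0 _.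
  have [L0|Llt0] := eqVneq L_r 0; first by rewrite L0 mulr0.
  have Llt : L_r < 0 by rewrite lt_neqAle Llt0 Lneg.
  have dSA0 : forall x y : n.-tuple R * m.-tuple R, dist_SA x y = 0.
    move=> x y; apply/eqP; rewrite eq_le dist_SA_ge0 andbT.
    have := le_trans (normr_ge0 _) (Lip x y).
    by rewrite nmulr_rge0.
  pose a0 : m.-tuple R := [tuple of nseq m 0].
  pose s0 : n.-tuple R := [tuple of nseq n 0].
  have sq1 : forall s s' : n.-tuple R, sqdist s s' = 0.
    move=> s s'; have := dSA0 (s, a0) (s', a0).
    move/eqP; rewrite sqrtr_eq0 /= => H.
    apply/eqP; rewrite eq_le sqdist_ge0 andbT.
    by apply: le_trans H; rewrite lerDl sqdist_ge0.
  have sq2 : forall s s' : m.-tuple R, sqdist s s' = 0.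
    move=> s s'; have := dSA0 (s0, s) (s0, s').
    move/eqP; rewrite sqrtr_eq0 /= => H.
    apply/eqP; rewrite eq_le sqdist_ge0 andbT.
    by apply: le_trans H; rewrite lerDr sqdist_ge0.
  have eps0 : eps <= 0.
    have : (eps%:E <= \int[c0]_z (dist_SAS z.1 z.2)%:E)%E.
      by rewrite -W1eq; apply: ereal_inf_lbound; exists c0.
    rewrite (eq_integral (cst 0%E)); last first.
      by move=> w _; rewrite /dist_SAS !sq1 sq2 !addr0 sqrtr0.
    by rewrite integral0 lee_fin.
  by rewrite mulr_le0.
rewrite -Ea -Eb -!EFinM -EFinB abse_EFin lee_fin.
rewrite -mulrBl normrM (@ger0_norm _ (1 - gamma)^-1); last first.
  by rewrite invr_ge0 subr_ge0 ltW.
by rewrite ler_wpM2r// invr_ge0 subr_ge0 ltW.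
Qed.
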